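(* Every cubic space $(W,g)$ of dimension at most $\aleph_0$ embeds into the cubic space $V(\infty)$.
   Context: $k$ is algebraically closed of characteristic different from $2,3$. For a vector space with a basis, the dual functionals are called coordinates; $P_n(V)$ is the space of formal, possibly infinite, $k$-linear combinations of degree-$n$ monomials in the coordinates. A cubic space is $(V,f)$ with $f\in P_3(V)$; an embedding $(W,g)\to(V,f)$ is a $k$-linear map $\phi:W\to V$ with $f\circ\phi=g$. The cubic space $V(\infty)$ has coordinates $\{x_i\}_{i\ge1}\cup\{y_{i,j}\}_{i,j\ge1}$ and form $f_\infty=3\sum_{i\ge1}x_iq_i$ with $q_i=\sum_{j\ge1}y_{i,j}^2$. *)

(* Defs.v *)
From mathcomp Require Import all_boot all_order all_algebra.
Set Implicit Arguments. Unset Strict Implicit. Unset Printing Implicit Defensive.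
Import GRing.Theory.
Local Open Scope ring_scope.

(* A vector space with a countable basis indexed by J : countType is modelled
   as the finitely supported functions J -> k (the coordinate vectors). *)
Definition covers (J : eqType) (k : nzRingType) (s : seq J) (v : J -> k) :=
  forall j, v j != 0 -> j \in s.

Definition fsupp (J : eqType) (k : nzRingType) (v : J -> k) :=
  exists s : seq J, covers s v.

(* A k-linear map between such spaces: only its values on finitely supported
   vectors matter. *)
Definition fs_linear (J I : eqType) (k : nzRingType) (phi : (J -> k) -> (I -> k)) :=
  (forall v, fsupp v -> fsupp (phi v)) /\
  (forall (a : k) (v w : J -> k), fsupp v -> fsupp w ->
     forall i, phi (fun j => a * v j + w j) i = a * phi v i + phi w i).

(* An element of P_3 (a formal, possibly infinite, linear combination of
   degree-3 monomials in the coordinates) is given by its coefficient function: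
   f a b c is the coefficient of the monomial x_a x_b x_c, read only on
   triples sorted by the injective enumeration pickle
   (pickle a <= pickle b <= pickle c), so that each monomial corresponds to
   exactly one sorted triple. *)
Definition cubic (J : countType) (k : nzRingType) := J -> J -> J -> k.

Definition sorted3 (J : countType) (a b c : J) :=
  (pickle a <= pickle b)%N && (pickle b <= pickle c)%N.

(* Value of the cubic form f at the finitely supported vector v, computed as a
   finite sum over a sequence s covering the support of v (the result does
   not depend on such s). *)
Definition cubic_eval (J : countType) (k : nzRingType) (f : cubic J k)
    (s : seq J) (v : J -> k) : k :=
  \sum_(a <- undup s) \sum_(b <- undup s) \sum_(c <- undup s | sorted3 a b c)
     f a b c * v a * v b * v c.

(* The cubic space V(infinity): coordinates x_i (i >= 1), encoded as inl (i-1),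
   and y_{i,j} (i,j >= 1), encoded as inr (i-1, j-1). *)
Definition Vinf_idx : countType := (nat + (nat * nat))%type.

Definition mon_xyy (x y z : Vinf_idx) : bool :=
  match x, y with
  | inl i, inr (i', _) => (i == i')%N && (y == z)
  | _, _ => false
  end.

(* f_infinity = 3 * sum_i x_i * sum_j y_{i,j}^2 : coefficient 3 on each monomial
   x_i y_{i,j}^2 and 0 on all others (symmetric in the three arguments). *)
Definition f_inf (k : nzRingType) : cubic Vinf_idx k :=
  fun a b c => if [|| mon_xyy a b c, mon_xyy b a c | mon_xyy c a b]
               then 3%:R else 0.

Definition cubic_embedding (J I : countType) (k : nzRingType)
    (g : cubic J k) (f : cubic I k) (phi : (J -> k) -> (I -> k)) :=
  fs_linear phi /\
  forall w : J -> k, forall s : seq J, covers s w ->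
    forall s' : seq I, covers s' (phi w) ->
      cubic_eval f s' (phi w) = cubic_eval g s w.

(* Main.v *)
Require Import Defs.
From mathcomp Require Import all_boot all_order all_algebra.
From mathcomp Require Import ring.
From Stdlib Require Import ClassicalEpsilon FunctionalExtensionality.
Set Implicit Arguments. Unset Strict Implicit. Unset Printing Implicit Defensive.
Import GRing.Theory.
Local Open Scope ring_scope.

Lemma sum_filter_cover (R : nmodType) (T : eqType) (h : T -> R) (t1 s: seq T) :
  (forall x, x \notin t1 -> h x = 0) ->
  \sum_(x <- s) h x = \sum_(x <- s | x \in t1) h x.
Proof. move=> H; rewrite [RHS]big_mkcond /=; apply: eq_bigr => x _. by case: ifP => // /negbT /H ->. Qed.

Lemma sum_cover (R : nmodType) (T : eqType) (h : T -> R) (s t : seq T) :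
  (forall x, x \notin s -> h x = 0) -> (forall x, x \notin t -> h x = 0) ->
  \sum_(x <- undup s) h x = \sum_(x <- undup t) h x.
Proof.
move=> Hs Ht.
rewrite (sum_filter_cover (undup s) Ht) [RHS](sum_filter_cover (undup t) Hs) -[LHS]big_filter -[RHS]big_filter; apply: perm_big.
apply: uniq_perm; rewrite ?filter_uniq ?undup_uniq // => x.
by rewrite !mem_filter !mem_undup andbC.
Qed.

Lemma sum_uniq (R : nmodType) (T : eqType) (h : T -> R) (s : seq T) :
  uniq s -> \sum_(x <- undup s) h x = \sum_(x <- s) h x.
Proof. by move=> u; rewrite undup_id. Qed.

Lemma reindex_pickle (R : nmodType) (T : countType) (h : T -> R) (s : seq T) N :
  (forall x, x \notin s -> h x = 0) -> (forall x, x \in s -> (pickle x < N)%N) ->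
  \sum_(x <- undup s) h x = \sum_(n < N) oapp h 0 (pickle_inv n).
Proof.
move=> Hs HN.
rewrite -(big_mkord xpredT (fun n => oapp h 0 (pickle_inv n))).
rewrite -(sum_uniq _ (iota_uniq 0 (N - 0))).
rewrite (@sum_cover _ _ _ _ (map pickle (undup s))); last first.
- move=> n; have := @pickle_invK T n; case: (pickle_inv n) => //= a <-.
  rewrite mem_map; last exact: (@pcan_inj _ _ _ _ (@pickleK_inv T)).
  by rewrite mem_undup => /Hs.
- move=> n; have := @pickle_invK T n; case: (pickle_inv n) => //= a <-.
  rewrite mem_iota /= add0n subn0; case: (boolP (a \in s)) => [/HN -> //|].
  by move=> /Hs.
rewrite [RHS]sum_uniq; last by rewrite map_inj_uniq ?undup_uniq //; exact: (@pcan_inj _ _ _ _ (@pickleK_inv T)).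
by rewrite big_map; apply: eq_bigr => a _; rewrite pickleK_inv.
Qed.

Lemma sum_bound (R : nmodType) (h : nat -> R) M N :
  (M <= N)%N -> (forall n, (M <= n)%N -> h n = 0) ->
  \sum_(n < N) h n = \sum_(n < M) h n.
Proof.
move=> MN H; rewrite -!(big_mkord xpredT) (big_cat_nat (leq0n M) MN) /=.
rewrite [X in _ + X]big_nat_cond [X in _ + X]big1 ?addr0 // => i /andP[/andP[Mi _] _].
exact: H.
Qed.

Lemma sum_pairs (R : nmodType) (h : nat -> R) B :
  \sum_(j < B.*2) h j = \sum_(m < B) (h m.*2 + h m.*2.+1).
Proof.
rewrite -!(big_mkord xpredT); elim: B => [|B IH]; first by rewrite !big_mkord !big_ord0.
rewrite doubleS !big_nat_recr //= ?IH big_ord_recr /= addrA.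
done.
Qed.

Lemma sum_boundn (R : nmodType) (h : nat -> R) M N :
  (M <= N)%N -> (forall n, (M <= n)%N -> h n = 0) ->
  \sum_(0 <= n < N) h n = \sum_(0 <= n < M) h n.
Proof. by move=> MN H; rewrite !big_mkord; apply: sum_bound. Qed.

Lemma sum_pairsn (R : nmodType) (h : nat -> R) B :
  \sum_(0 <= j < B.*2) h j = \sum_(0 <= m < B) (h m.*2 + h m.*2.+1).
Proof. by rewrite !big_mkord sum_pairs. Qed.

Lemma reindex_pickle_n (R : nmodType) (T : countType) (h : T -> R) (s : seq T) N :
  (forall x, x \notin s -> h x = 0) -> (forall x, x \in s -> (pickle x < N)%N) ->
  \sum_(x <- undup s) h x = \sum_(0 <= n < N) oapp h 0 (pickle_inv n).
Proof. by move=> H1 H2; rewrite big_mkord; exact: reindex_pickle. Qed.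


Lemma sum_only (R : nmodType) (T : eqType) (r : seq T) (b : T) (F : T -> R) :
  uniq r -> b \in r -> (forall c, c != b -> F c = 0) -> \sum_(c <- r) F c = F b.
Proof.
move=> u br H; rewrite (bigD1_seq b br u) /= big1 ?addr0 // => c; exact: H.
Qed.

Definition Hf (k : fieldType) (v : Vinf_idx -> k) (p q : Vinf_idx) : k :=
  match p, q with
  | inl i, inr (i', _) => if i == i' then 3%:R * v p * v q * v q else 0
  | _, _ => 0 end.

Lemma mon_l x i z : mon_xyy x (inl i) z = false.
Proof. by case: x. Qed.

Lemma f_inf_inl (k : fieldType) i b c :
  f_inf k (inl i) b c = if mon_xyy (inl i) b c then 3%:R else 0.
Proof. by rewrite /f_inf !mon_l !orbF. Qed.

Lemma f_inf_inr (k : fieldType) p b c :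
  f_inf k (inr p) b c = if mon_xyy b (inr p) c || mon_xyy c (inr p) b then 3%:R else 0.
Proof. by rewrite /f_inf. Qed.

Lemma Fa_eq (k : fieldType) (s : seq Vinf_idx) (v : Vinf_idx -> k) a :
  a \in undup s ->
  \sum_(b <- undup s) \sum_(c <- undup s | sorted3 a b c) f_inf k a b c * v a * v b * v c
  = \sum_(b <- undup s) (if (pickle a <= pickle b)%N then Hf v a b + Hf v b a else 0).
Proof.
move=> aS; case: a aS => [i|[i j]] aS.
- apply: eq_big_seq => b bS.
  under eq_bigr => c _ do rewrite f_inf_inl.
  case: b bS => [i'|[i' j']] bS.
  + rewrite big1 /=; first by case: ifP => //; rewrite addr0.
    by move=> c _; rewrite mul0r !mul0r.
  + rewrite /= -big_filter.
    have [E|ne] /= := eqVneq i i'; last first.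
      by rewrite big1 /=; [case: ifP => //; rewrite addr0 | move=> c _; rewrite !mul0r].
    subst i'; rewrite big_filter big_mkcond /=.
    rewrite (@sum_only _ _ _ (inr (i, j'))) ?undup_uniq //; last first.
      by move=> c; rewrite eq_sym => /negbTE ->; rewrite mul0r !mul0r; case: ifP.
    rewrite eqxx /sorted3 leqnn andbT addr0.
    by case: ifP.
- set a := inr (i, j).
  rewrite (@sum_only _ _ _ a) ?undup_uniq //; last first.
    move=> b ba; apply: big1 => c sabc.
    rewrite /f_inf /=.
    suff -> : mon_xyy b a c || mon_xyy c a b = false by rewrite !mul0r.
    apply/negbTE; apply/negP => /orP[].
      case: b ba sabc => [i'|//] ba sabc /andP[_ /eqP ca].
      move: sabc; rewrite /sorted3 -ca => /andP[h1 h2].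
      have /eqP E : (pickle a == pickle (inl i' : Vinf_idx)) by rewrite eqn_leq h1 h2.
      have : a = inl i' by apply: (@pcan_inj _ _ _ _ (@pickleK_inv Vinf_idx)).
      by [].
    case: c sabc => [i'|//] _ /andP[_ /eqP ab].
    by move: ba; rewrite ab eqxx.
  rewrite big_mkcond; apply: eq_bigr => c _.
  rewrite /sorted3 leqnn /=; case: ifP => // _; rewrite f_inf_inr.
  case: c => [i'|[i' j']] /=.
  + have [E|ne] /= := eqVneq i' i; last by rewrite !mul0r addr0.
    subst i'; rewrite eqxx /= add0r; ring.
  + by rewrite !mul0r addr0.
Qed.

Lemma Hf_diag (k : fieldType) (v : Vinf_idx -> k) p : Hf v p p = 0.
Proof. by case: p => [i|[i j]]. Qed.

Lemma Hf_split (k : fieldType) (v : Vinf_idx -> k) p q :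
  (if (pickle p <= pickle q)%N then Hf v p q else 0) +
  (if (pickle q <= pickle p)%N then Hf v p q else 0) = Hf v p q.
Proof.
case: (ltngtP (pickle p) (pickle q)) => [_|_|E]; rewrite ?addr0 ?add0r //.
have -> : p = q by apply: (@pcan_inj _ _ _ _ (@pickleK_inv Vinf_idx)).
by rewrite Hf_diag addr0.
Qed.

Lemma eval_finf (k : fieldType) (s : seq Vinf_idx) (v : Vinf_idx -> k) :
  cubic_eval (f_inf k) s v = \sum_(p <- undup s) \sum_(q <- undup s) Hf v p q.
Proof.
rewrite /cubic_eval.
transitivity (\sum_(a <- undup s) \sum_(b <- undup s)
   ((if (pickle a <= pickle b)%N then Hf v a b else 0) +
    (if (pickle a <= pickle b)%N then Hf v b a else 0))).
  apply: eq_big_seq => a aS; rewrite (Fa_eq v aS); apply: eq_bigr => b _.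
  by case: ifP; rewrite ?addr0.
under eq_bigr do rewrite big_split /=.
rewrite big_split /= [X in _ + X]exchange_big /= -big_split /=.
apply: eq_bigr => p _; rewrite -big_split /=; apply: eq_bigr => q _.
exact: Hf_split.
Qed.


Definition nbound (k : fieldType) (u : nat -> k) (B : nat) :=
  forall n, (B <= n)%N -> u n = 0.

Definition bnd (k : fieldType) (u : nat -> k) : nat :=
  match excluded_middle_informative (exists B, nbound u B) with
  | left H => proj1_sig (constructive_indefinite_description _ H)
  | right _ => 0%N end.

Lemma bndP (k : fieldType) (u : nat -> k) : (exists B, nbound u B) -> nbound u (bnd u).
Proof.
move=> H; rewrite /bnd; case: excluded_middle_informative => // H'.
by case: constructive_indefinite_description.
Qed.

Lemma nbound_min (k : fieldType) (u : nat -> k) B B' :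
  nbound u B -> nbound u B' -> nbound u (minn B B').
Proof. by move=> h h'; case: (leqP B B') => _. Qed.

Definition Lm (k : fieldType) (G : nat -> nat -> nat -> k) (u : nat -> k) (B i m : nat) : k :=
  \sum_(0 <= n < B) (if (m <= n)%N then G i m n * u n else 0).

Lemma Lm_min (k : fieldType) G (u : nat -> k) B B' i m :
  nbound u B -> nbound u B' -> Lm G u B i m = Lm G u (minn B B') i m.
Proof.
move=> h h'; rewrite /Lm (@sum_boundn _ _ (minn B B') B) ?geq_minl //.
move=> n hn; rewrite (nbound_min h h') // mulr0; by case: ifP.
Qed.

Lemma Lm_indep (k : fieldType) G (u : nat -> k) B B' i m :
  nbound u B -> nbound u B' -> Lm G u B i m = Lm G u B' i m.
Proof.
by move=> h h'; rewrite (Lm_min G i m h h') (Lm_min G i m h' h) minnC.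
Qed.

Definition Phi (k : fieldType) (im : k) (G : nat -> nat -> nat -> k) (u : nat -> k)
   (p : Vinf_idx) : k :=
  match p with
  | inl i => u i / 3%:R
  | inr (i, j) =>
     if (i <= j./2)%N then
       (if odd j then im * (u j./2 - Lm G u (bnd u) i j./2)
        else u j./2 + Lm G u (bnd u) i j./2) / 2%:R
     else 0
  end.

Definition sV (B : nat) : seq Vinf_idx :=
  [seq inl i | i <- iota 0 B] ++ [seq inr (i, j) | i <- iota 0 B, j <- iota 0 B.*2].

Lemma sV_uniq B : uniq (sV B).
Proof.
rewrite cat_uniq; apply/and3P; split.
- by rewrite map_inj_uniq ?iota_uniq // => x y [].
- apply/hasPn => x /allpairsP [[i j] [_ _ ->]] /=.
  by apply/negP => /mapP [y _].
- apply: allpairs_uniq; rewrite ?iota_uniq //.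
  by move=> [a b] [c d] _ _ /= [-> ->].
Qed.

Lemma Phi_supp (k : fieldType) im G (u : nat -> k) x :
  nbound u (bnd u) -> x \notin sV (bnd u) -> Phi im G u x = 0.
Proof.
move=> hb; set B := bnd u; case: x => [i|[i j]] /=.
- case: (ltnP i B) => iB.
    by rewrite mem_cat (map_f (fun i => inl i : Vinf_idx)) // mem_iota.
  by move=> _; rewrite hb // mul0r.
- move=> nin; case: ifP => // ij.
  case: (ltnP j B.*2) => jB.
    case: (ltnP i B) => iB.
      move: nin; rewrite mem_cat (allpairs_f (fun i j => inr (i, j) : Vinf_idx)) ?orbT //.
      by rewrite mem_iota. by rewrite mem_iota.
    move: jB; rewrite -ltn_half_double => jB.
    by move: (leq_ltn_trans ij jB); rewrite ltnNge iB.
  move: jB; rewrite -geq_half_double => jB.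
  have -> : Lm G u B i j./2 = 0.
    rewrite /Lm big_nat_cond big1 // => n /andP[/andP[_ nB] _]; case: ifP => // h.
    by move: (leq_ltn_trans (leq_trans jB h) nB); rewrite ltnn.
  by rewrite hb // subr0 addr0 mulr0; case: ifP; rewrite mul0r.
Qed.

Lemma nbound_le (k : fieldType) (u : nat -> k) B B' :
  (B <= B')%N -> nbound u B -> nbound u B'.
Proof. by move=> le h n hn; apply: h; apply: leq_trans hn. Qed.

Lemma Lm_lin (k : fieldType) G (u1 u2 : nat -> k) a B i m :
  Lm G (fun n => a * u1 n + u2 n) B i m = a * Lm G u1 B i m + Lm G u2 B i m.
Proof.
rewrite /Lm mulr_sumr -big_split /=; apply: eq_bigr => n _.
case: ifP => _; ring.
Qed.

Lemma Phi_lin (k : fieldType) im G (u1 u2 : nat -> k) a B1 B2 p :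
  nbound u1 B1 -> nbound u2 B2 ->
  Phi im G (fun n => a * u1 n + u2 n) p = a * Phi im G u1 p + Phi im G u2 p.
Proof.
move=> h1 h2; set u := fun n => _.
have hu : nbound u (maxn B1 B2).
  move=> n hn; rewrite /u (nbound_le (leq_maxl B1 B2) h1) //.
  by rewrite (nbound_le (leq_maxr B1 B2) h2) // mulr0 addr0.
have e : forall i m, Lm G u (bnd u) i m = a * Lm G u1 (bnd u1) i m + Lm G u2 (bnd u2) i m.
  move=> i m; rewrite (Lm_indep G i m (bndP (ex_intro _ _ hu)) hu).
  rewrite (Lm_indep G i m (bndP (ex_intro _ _ h1)) (nbound_le (leq_maxl B1 B2) h1)).
  rewrite (Lm_indep G i m (bndP (ex_intro _ _ h2)) (nbound_le (leq_maxr B1 B2) h2)).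
  exact: Lm_lin.
case: p => [i|[i j]] /=; first by rewrite /u; ring.
rewrite e; case: ifP => _; last by rewrite mulr0 addr0.
rewrite /u; case: ifP => _; ring.
Qed.

Lemma alg (k : fieldType) (im x y z : k) : im * im = -1 -> 2%:R != 0 :> k -> 3%:R != 0 :> k ->
 3%:R * (x / 3%:R) * ((y + z) / 2%:R) * ((y + z) / 2%:R) +
 3%:R * (x / 3%:R) * (im * (y - z) / 2%:R) * (im * (y - z) / 2%:R) = x * y * z.
Proof.
move=> hi h2 h3.
have h4 : 4%:R != 0 :> k by rewrite -[4%:R]/(2*2)%:R natrM mulf_neq0.
have -> : forall w : k, 3%:R * (x / 3%:R) * (im * w / 2%:R) * (im * w / 2%:R) = - (x * w * w / 4%:R).
  move=> w; rewrite -[RHS]mulN1r -hi; field; by rewrite h2 h3 h4.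
field; by rewrite h2 h3 h4.
Qed.

Definition T (k : fieldType) (G : nat -> nat -> nat -> k) (u : nat -> k) (B : nat) : k :=
  \sum_(0 <= i < B) \sum_(0 <= m < B) (if (i <= m)%N then u i * u m * Lm G u B i m else 0).

Lemma Hf_l (k : fieldType) (v : Vinf_idx -> k) p q : v p = 0 -> Hf v p q = 0.
Proof. by case: p q => [i|[i j]] [i'|[i' j']] //= ->; case: ifP; rewrite ?mulr0 ?mul0r. Qed.

Lemma Hf_r (k : fieldType) (v : Vinf_idx -> k) p q : v q = 0 -> Hf v p q = 0.
Proof. by case: p q => [i|[i j]] [i'|[i' j']] //= ->; case: ifP; rewrite ?mulr0 ?mul0r. Qed.

Lemma Phi_eval (k : fieldType) im G (u : nat -> k) (s' : seq Vinf_idx) :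
  im * im = -1 -> 2%:R != 0 :> k -> 3%:R != 0 :> k ->
  nbound u (bnd u) -> covers s' (Phi im G u) ->
  cubic_eval (f_inf k) s' (Phi im G u) = T G u (bnd u).
Proof.
move=> hi h2 h3 hb hc.
rewrite eval_finf; set v := Phi im G u; set B := bnd u.
have vz : forall x, x \notin sV B -> v x = 0 by move=> x; exact: Phi_supp.
have vz' : forall x, x \notin s' -> v x = 0.
  by move=> x xn; apply/eqP; apply: contraNT xn; exact: hc.
transitivity (\sum_(p <- undup s') \sum_(q <- undup (sV B)) Hf v p q).
  apply: eq_bigr => p _; apply: sum_cover => q qn; apply: Hf_r; [exact: vz' | exact: vz].
rewrite (@sum_cover _ _ _ _ (sV B)); last first.
- by move=> p pn; apply: big1 => q _; apply: Hf_l; exact: vz.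
- by move=> p pn; apply: big1 => q _; apply: Hf_l; exact: vz'.
rewrite sum_uniq ?sV_uniq //.
under eq_bigr do rewrite sum_uniq ?sV_uniq //.
rewrite {1}/sV big_cat /= big_map big_allpairs_dep /=.
rewrite [X in _ + X]big1 ?addr0; last by move=> i _; apply: big1 => j _; apply: big1.
rewrite /T /index_iota subn0; apply: eq_big_seq => i iB.
rewrite /sV big_cat /= big_map big1 ?add0r; last by [].
rewrite big_allpairs_dep /= (@sum_only _ _ _ i) ?iota_uniq //; last first.
  by move=> i' ne; apply: big1 => j _; rewrite eq_sym (negbTE ne).
rewrite eqxx -{1}(subn0 B.*2) -/(index_iota 0 B.*2) sum_pairsn.
rewrite /index_iota subn0; apply: eq_bigr => m _.
rewrite /v /Phi /= doubleK uphalf_double odd_double /=.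
case: ifP => _; last by rewrite !mulr0 addr0.
exact: alg.
Qed.


Definition uof (k : fieldType) (J : countType) (w : J -> k) (n : nat) : k :=
  oapp w 0 (pickle_inv n).

Definition Gof (k : fieldType) (J : countType) (g : cubic J k) (n1 n2 n3 : nat) : k :=
  oapp (fun a => oapp (fun b => oapp (fun c => g a b c) 0 (pickle_inv n3))
                        0 (pickle_inv n2)) 0 (pickle_inv n1).

Definition bmax (J : countType) (s : seq J) : nat := \max_(a <- s) (pickle a).+1.

Lemma bmaxP (J : countType) (s : seq J) a : a \in s -> (pickle a < bmax s)%N.
Proof. by move=> as_; rewrite /bmax (leq_bigmax_seq (F := fun a : J => (pickle a).+1) a). Qed.

Lemma uof_bound (k : fieldType) (J : countType) (w : J -> k) s :
  covers s w -> nbound (uof w) (bmax s).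
Proof.
move=> hc n hn; rewrite /uof; have := @pickle_invK J n; case: pickle_inv => //= a ea.
apply/eqP; apply: contraTT hn => wa; rewrite -ltnNge -ea; apply: bmaxP; exact: hc.
Qed.

Lemma T_min (k : fieldType) G (u : nat -> k) B B' :
  nbound u B -> nbound u B' -> T G u B = T G u (minn B B').
Proof.
move=> h h'; have hm := nbound_min h h'.
rewrite /T (@sum_boundn _ _ (minn B B') B) ?geq_minl //; last first.
  by move=> n hn; apply: big1 => m _; rewrite (hm n hn); case: ifP; rewrite ?mul0r.
apply: eq_bigr => i _; rewrite (@sum_boundn _ _ (minn B B') B) ?geq_minl //; last first.
  by move=> n hn; rewrite (hm n hn); case: ifP; rewrite ?mulr0 ?mul0r.
by apply: eq_bigr => m _; rewrite (Lm_min G i m h h').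
Qed.

Lemma T_indep (k : fieldType) G (u : nat -> k) B B' :
  nbound u B -> nbound u B' -> T G u B = T G u B'.
Proof. by move=> h h'; rewrite (T_min G h h') (T_min G h' h) minnC. Qed.

Lemma g_eval (k : fieldType) (J : countType) (g : cubic J k) (w : J -> k) s :
  covers s w -> cubic_eval g s w = T (Gof g) (uof w) (bmax s).
Proof.
move=> hc.
have wz : forall x, x \notin s -> w x = 0.
  by move=> x xn; apply/eqP; apply: contraNT xn; exact: hc.
rewrite /cubic_eval.
under eq_bigr do under eq_bigr do rewrite big_mkcond /=.
rewrite (@reindex_pickle_n _ _ _ _ (bmax s)); last first.
- exact: bmaxP.
- by move=> a an; apply: big1 => b _; apply: big1 => c _; rewrite (wz a an); case: ifP; rewrite ?mulr0 ?mul0r.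
rewrite /T /Lm /uof /Gof; apply: eq_bigr => n1 _.
have := @pickle_invK J n1; case: pickle_inv => [a|] /= e1; last first.
  by rewrite big1 // => n2 _; case: ifP; rewrite ?mul0r.
rewrite (@reindex_pickle_n _ _ (fun b => \sum_(c <- undup s) (if sorted3 a b c then g a b c * w a * w b * w c else 0)) s (bmax s)); last first.
- exact: bmaxP.
- by move=> b bn; apply: big1 => c _; rewrite (wz b bn); case: ifP; rewrite ?mulr0 ?mul0r.
apply: eq_bigr => n2 _.
have := @pickle_invK J n2; case: pickle_inv => [b|] /= e2; last first.
  by case: ifP; rewrite ?mulr0 ?mul0r.
rewrite (@reindex_pickle_n _ _ (fun c => if sorted3 a b c then g a b c * w a * w b * w c else 0) s (bmax s)); last first.
- exact: bmaxP.
- by move=> c cn; rewrite (wz c cn); case: ifP; rewrite ?mulr0 ?mul0r.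
case: ifP => le12; last first.
  apply: big1 => n3 _; case: pickle_inv => //= c.
  by rewrite /sorted3 e1 e2 le12.
rewrite mulr_sumr; apply: eq_bigr => n3 _.
have := @pickle_invK J n3; case: pickle_inv => [c|] /= e3; last first.
  by case: ifP; rewrite ?mulr0.
rewrite /sorted3 e1 e2 e3 le12 /=; case: ifP => _; last by rewrite mulr0.
ring.
Qed.


Theorem lemma4p3 (k : closedFieldType)
    (hk2 : (2 \notin [pchar k])%N) (hk3 : (3 \notin [pchar k])%N)
    (J : countType) (g : cubic J k) :
  exists phi : (J -> k) -> (Vinf_idx -> k),
    cubic_embedding g (f_inf k) phi.
Proof.
have h2 : 2%:R != 0 :> k by move: hk2; rewrite !inE.
have h3 : 3%:R != 0 :> k by move: hk3; rewrite !inE.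
have [im him] : exists im : k, im * im = -1.
  have [x hx] := @solve_monicpoly k 2 (fun i => if i == 0%N then -1 else 0) isT.
  exists x; move: hx; rewrite expr2 => ->.
  by rewrite !big_ord_recr big_ord0 /= add0r mul0r addr0 expr0 mulr1.
exists (fun w => Phi im (Gof g) (uof w)).
have bP : forall w : J -> k, fsupp w -> nbound (uof w) (bnd (uof w)).
  by move=> w [s hs]; apply: bndP; exists (bmax s); exact: uof_bound.
split; first split.
- move=> v hv; exists (sV (bnd (uof v))) => x nz.
  apply/negPn/negP => xn; move/eqP: nz; apply; apply: Phi_supp => //; exact: bP.
- move=> a v w [s1 c1] [s2 c2] i.
  have -> : uof (fun j => a * v j + w j) = (fun n => a * uof v n + uof w n).
    apply: functional_extensionality => n; rewrite /uof; case: pickle_inv => //=; by rewrite mulr0 addr0.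
  exact: (Phi_lin _ _ _ _ (uof_bound c1) (uof_bound c2)).
- move=> w s hc s' hc'.
  rewrite (Phi_eval him h2 h3 (bP w (ex_intro _ s hc)) hc') (g_eval g hc).
  apply: T_indep; [exact: bP (ex_intro _ s hc) | exact: uof_bound].
Qed.
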